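(* Let $N=\{1,\ldots,n\}$, $\mathcal{X}=\{-1,1\}^n$, and fix $p^\circ\in\Delta(\mathcal{X})$ with $p^\circ(x)>0$ for all $x\in\mathcal{X}$. For a deterministic voting rule $\phi:\mathcal{X}\to\{-1,1\}$: (1) $\phi$ is strictly efficient under $p^\circ$ if and only if it is a weighted majority rule with nonnegative weights such that there are no ties; (2) $\phi$ is efficient under $p^\circ$ if and only if it is a weighted majority rule with positive weights; (3) $\phi$ is weakly efficient under $p^\circ$ if and only if it is a weighted majority rule with nonnegative weights.
   Context: A random voting rule is a map $\bar\phi:\mathcal{X}\to[-1,1]$ (outcome $1$ with probability $(1+\bar\phi(x))/2$, else $-1$); deterministic rules are special cases. Under $p$, individual $i$'s responsiveness to $\bar\phi$ is $(E_p[\bar\phi(x)x_i]+1)/2$. A rule $\psi$ is weakly Pareto-preferred to $\phi$ under $p$ if every individual's responsiveness under $\psi$ is $\geq$ that under $\phi$; Pareto-preferred if additionally strict for at least one individual; strictly Pareto-preferred if strict for all individuals. $\phi$ is strictly efficient under $p$ if no other random rule is weakly Pareto-preferred to it; efficient if no random rule is Pareto-preferred to it; weakly efficient if no random rule is strictly Pareto-preferred to it. A weighted majority rule with nonzero weight vector $w\in\mathbb{R}^n$ satisfies $\phi(x)=1$ if $\sum_iw_ix_i>0$ and $\phi(x)=-1$ if $\sum_iw_ix_i<0$ (ties resolved arbitrarily); it has no ties if $\sum_iw_ix_i\neq0$ for all $x$. *)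

(* Defs.v *)
From mathcomp Require Import all_boot all_order all_algebra.
From mathcomp Require Import reals.
Set Implicit Arguments. Unset Strict Implicit. Unset Printing Implicit Defensive.
Import Order.TTheory GRing.Theory Num.Theory.
Local Open Scope ring_scope.

(* Profiles x in X = {-1,1}^n, encoded as boolean vectors: true = +1, false = -1. *)
Definition profile (n : nat) := {ffun 'I_n -> bool}.

Definition pm1 {R : ringType} (b : bool) : R := if b then 1 else -1.

Section Voting.
Variables (R : realType) (n : nat).

Definition full_support_dist (p : profile n -> R) : Prop :=
  (forall x, 0 < p x) /\ \sum_(x : profile n) p x = 1.

Definition random_rule (phi : profile n -> R) : Prop :=
  forall x, -1 <= phi x <= 1.

Definition responsiveness (p : profile n -> R) (phi : profile n -> R) (i : 'I_n) : R :=
  (\sum_(x : profile n) p x * (phi x * pm1 (x i)) + 1) / 2.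

Definition weakly_pareto_pref p (psi phi : profile n -> R) : Prop :=
  forall i, responsiveness p phi i <= responsiveness p psi i.

Definition pareto_pref p (psi phi : profile n -> R) : Prop :=
  weakly_pareto_pref p psi phi /\ exists i, responsiveness p phi i < responsiveness p psi i.

Definition strictly_pareto_pref p (psi phi : profile n -> R) : Prop :=
  forall i, responsiveness p phi i < responsiveness p psi i.

Definition strictly_efficient p (phi : profile n -> R) : Prop :=
  ~ exists psi, random_rule psi /\ psi <> phi /\ weakly_pareto_pref p psi phi.

Definition efficient p (phi : profile n -> R) : Prop :=
  ~ exists psi, random_rule psi /\ pareto_pref p psi phi.

Definition weakly_efficient p (phi : profile n -> R) : Prop :=
  ~ exists psi, random_rule psi /\ strictly_pareto_pref p psi phi.

Definition det_rule (phi : profile n -> bool) : profile n -> R := fun x => pm1 (phi x).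

Definition wsum (w : 'I_n -> R) (x : profile n) : R := \sum_i w i * pm1 (x i).

(* weighted majority rule with nonzero weight vector w (ties arbitrary) *)
Definition weighted_majority (w : 'I_n -> R) (phi : profile n -> bool) : Prop :=
  (exists i, w i != 0) /\
  forall x, (0 < wsum w x -> phi x = true) /\ (wsum w x < 0 -> phi x = false).

Definition no_ties (w : 'I_n -> R) : Prop := forall x, wsum w x != 0.

End Voting.

(* Main.v *)
Require Import Defs.
From mathcomp Require Import all_boot all_order all_algebra.
From mathcomp Require Import reals.
From mathcomp Require Import ring lra.
From Stdlib Require Import FunctionalExtensionality Classical_Prop.
Set Implicit Arguments. Unset Strict Implicit. Unset Printing Implicit Defensive.
Import Order.TTheory GRing.Theory Num.Theory.
Local Open Scope ring_scope.
Section FM.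
Variable R : realFieldType.

Definition sat (s : bool) (v : R) : bool := if s then 0 < v else 0 <= v.

Lemma sat_le s v w : v <= w -> sat s v -> sat s w.
Proof. by case: s => /= vw h; [apply: lt_le_trans vw | apply: le_trans vw]. Qed.

Lemma sat_pos s v : 0 < v -> sat s v.
Proof. by case: s => //= /ltW. Qed.

Lemma sat_orl a b v : sat (a || b) v -> sat a v.
Proof. by case: a; case: b => //= /ltW. Qed.

Lemma sat_orr a b v : sat (a || b) v -> sat b v.
Proof. by case: a; case: b => //= /ltW. Qed.

Lemma sat_pmul s c v : 0 < c -> sat s (c * v) = sat s v.
Proof. by case: s => /= c0; [rewrite pmulr_rgt0 | rewrite pmulr_rge0]. Qed.

Lemma exists_max (K : finType) (P : pred K) (F : K -> R) :
  (exists k, P k) -> exists k, P k /\ forall l, P l -> F l <= F k.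
Proof.
case=> k0 Pk0.
case: (@arg_maxP _ _ K k0 P F Pk0) => k Pk H.
by exists k; split.
Qed.

Lemma one_dim (K : finType) (a r : K -> R) (s : K -> bool) :
  (forall k, a k = 0 -> sat (s k) (r k)) ->
  (forall k l, 0 < a k -> a l < 0 -> sat (s k || s l) ((- a l) * r k + a k * r l)) ->
  exists t, forall k, sat (s k) (a k * t + r k).
Proof.
move=> H0 H2.
pose tk k := - r k / a k.
have Epos k t : 0 < a k -> sat (s k) (a k * t + r k) = sat (s k) (t - tk k).
  move=> ak; rewrite -[RHS](sat_pmul _ _ ak); congr sat; rewrite /tk /=; field.
  by rewrite gt_eqF.
have Eneg k t : a k < 0 -> sat (s k) (a k * t + r k) = sat (s k) (tk k - t).
  move=> ak; have nak : 0 < - a k by rewrite oppr_gt0.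
  rewrite -[RHS](sat_pmul _ _ nak); congr sat; rewrite /tk /=; field.
  by rewrite lt_eqF.
have Epair k l : 0 < a k -> a l < 0 ->
   sat (s k || s l) (tk l - tk k).
  move=> ak al; have := H2 k l ak al.
  have p : 0 < a k * - a l by rewrite mulr_gt0 // oppr_gt0.
  rewrite -(sat_pmul _ (tk l - tk k) p).
  have -> : a k * - a l * (tk l - tk k) = - a l * r k + a k * r l.
    by rewrite /tk /=; field; rewrite gt_eqF // lt_eqF.
  by [].
have Hz k t : a k = 0 -> sat (s k) (a k * t + r k).
  by move=> ak; rewrite ak mul0r add0r; apply: H0.
have sat_half b v : sat b v -> sat b (v / 2).
  by rewrite mulrC sat_pmul // invr_gt0 ltr0n.
case: (boolP [exists k, 0 < a k]) => [/existsP EP|/existsPn nP];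
  case: (boolP [exists k, a k < 0]) => [/existsP EQ|/existsPn nQ].
- have [kL [PL HL]] := @exists_max K [pred k | 0 < a k] tk EP.
  have [lU [QU HU]] := @exists_max K [pred k | a k < 0] (fun k => - tk k) EQ.
  exists ((tk kL + tk lU) / 2) => k.
  have [ak|ak|ak] := ltrgt0P (a k); last by apply: Hz.
  + rewrite Epos //.
    apply: (sat_le _ (sat_half _ _ (sat_orl (Epair k lU ak QU)))).
    have := HL k ak; lra.
  + rewrite Eneg //.
    apply: (sat_le _ (sat_half _ _ (sat_orr (Epair kL k PL ak)))).
    have := HU k ak; rewrite /=; lra.
- have [kL [PL HL]] := @exists_max K [pred k | 0 < a k] tk EP.
  exists (tk kL + 1) => k.
  have [ak|ak|ak] := ltrgt0P (a k); last by apply: Hz.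
  + rewrite Epos //; apply: sat_pos; have := HL k ak; rewrite /=; lra.
  + by have := nQ k; rewrite ak.
- have [lU [QU HU]] := @exists_max K [pred k | a k < 0] (fun k => - tk k) EQ.
  exists (tk lU - 1) => k.
  have [ak|ak|ak] := ltrgt0P (a k); last by apply: Hz.
  + by have := nP k; rewrite ak.
  + rewrite Eneg //; apply: sat_pos; have := HU k ak; rewrite /=; lra.
- exists 0 => k.
  have [ak|ak|ak] := ltrgt0P (a k); last by apply: Hz.
  + by have := nP k; rewrite ak.
  + by have := nQ k; rewrite ak.
Qed.

Definition feasible n (K : finType) (c : K -> 'I_n -> R) (e : K -> R) (s : K -> bool) :=
  exists y : 'I_n -> R, forall k, sat (s k) (\sum_i c k i * y i + e k).

Definition cert n (K : finType) (c : K -> 'I_n -> R) (e : K -> R) (s : K -> bool)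
  (mu : K -> R) :=
  (forall k, 0 <= mu k) /\ (forall i, \sum_k mu k * c k i = 0) /\
  (\sum_k mu k * e k < 0 \/ (\sum_k mu k * e k = 0 /\ exists k, s k && (0 < mu k))).

Lemma sum_delta (K : finType) (k : K) (F : K -> R) :
  \sum_l (l == k)%:R * F l = F k.
Proof.
rewrite (bigD1 k) //= eqxx mul1r big1 ?addr0 // => l /negbTE ->.
by rewrite mul0r.
Qed.

Lemma swap_sum (K K' : finType) (mu : K' -> R) (rho : K' -> K -> R) (G : K -> R) :
  \sum_k (\sum_m mu m * rho m k) * G k = \sum_m mu m * (\sum_k rho m k * G k).
Proof.
under eq_bigr do rewrite mulr_suml.
rewrite exchange_big /=; apply: eq_bigr => m _; rewrite mulr_sumr.
by apply: eq_bigr => k _; rewrite mulrA.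
Qed.

Lemma cert_lift n (K K' : finType) (c : K -> 'I_n.+1 -> R) e s
   (rho : K' -> K -> R) (s' : K' -> bool) :
  (forall m k, 0 <= rho m k) -> (forall m, \sum_k rho m k * c k ord0 = 0) ->
  (forall m, s' m -> exists k, s k && (0 < rho m k)) ->
  forall mu', cert (fun m j => \sum_k rho m k * c k (lift ord0 j))
                   (fun m => \sum_k rho m k * e k) s' mu' ->
  exists mu, cert c e s mu.
Proof.
move=> rho0 rhoc rhos mu' [mu0 [muc mue]].
exists (fun k => \sum_m mu' m * rho m k); split; last split.
- by move=> k; apply: sumr_ge0 => m _; apply: mulr_ge0.
- move=> i; rewrite swap_sum.
  case: (unliftP ord0 i) => [j ->|->].
    exact: (muc j).
  + by apply: big1 => m _; rewrite rhoc mulr0.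
- rewrite swap_sum; case: mue => [->|[-> [m /andP [sm mm]]]]; [by left|right; split=>//].
  have [k /andP [sk rk]] := rhos m sm.
  exists k; rewrite sk /= (bigD1 m) //=.
  have h1 : 0 < mu' m * rho m k by apply: mulr_gt0.
  have h2 : 0 <= \sum_(m' | m' != m) mu' m' * rho m' k.
    by apply: sumr_ge0 => m' _; apply: mulr_ge0.
  lra.
Qed.

Lemma lin_comb n (K : finType) (rho : K -> R) (C : K -> 'I_n -> R) (E : K -> R) (y : 'I_n -> R) :
  \sum_j (\sum_k rho k * C k j) * y j + \sum_k rho k * E k =
  \sum_k rho k * (\sum_j C k j * y j + E k).
Proof.
under eq_bigr do rewrite mulr_suml.
rewrite exchange_big /= -big_split /=; apply: eq_bigr => k _.
by rewrite mulrDr mulr_sumr; congr (_ + _); apply: eq_bigr => j _; rewrite mulrA.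
Qed.


Lemma FM n : forall (K : finType) (c : K -> 'I_n -> R) (e : K -> R) (s : K -> bool),
  ~ feasible c e s -> exists mu, cert c e s mu.
Proof.
elim: n => [|n IH] K c e s nf.
  case: (boolP [forall k, sat (s k) (e k)]) => [/forallP H|/forallPn [k nk]].
    by case: nf; exists (fun _ => 0) => k; rewrite big_ord0 add0r.
  exists (fun l => (l == k)%:R); split; last split.
  - by move=> l; rewrite ler0n.
  - by case.
  - rewrite sum_delta; move: nk; case sk: (s k) => /=; rewrite -?ltNge -?leNgt.
    + rewrite le_eqVlt => /orP [/eqP ->|->]; [right; split=>//|by left].
      by exists k; rewrite sk eqxx ltr01.
    + by move=> ->; left.
pose a k := c k ord0.
pose rho (m : (K + K * K)%type) (k' : K) : R :=
  match m with
  | inl k => if a k == 0 then (k' == k)%:R else 0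
  | inr (k, l) => if (0 < a k) && (a l < 0) then
                   - a l * (k' == k)%:R + a k * (k' == l)%:R else 0
  end.
pose s' (m : (K + K * K)%type) : bool :=
  match m with
  | inl k => (a k == 0) && s k
  | inr (k, l) => [&& 0 < a k, a l < 0 & s k || s l]
  end.
have rho0 m k : 0 <= rho m k.
  case: m => [k'|[k' l']] /=; first by case: ifP => // _; rewrite ler0n.
  case: ifP => // /andP [h1 h2].
  by apply: addr_ge0; apply: mulr_ge0; rewrite ?ler0n // ?oppr_ge0 ltW.
have rhoc m : \sum_k rho m k * c k ord0 = 0.
  case: m => [k'|[k' l']] /=.
    case h: (a k' == 0); last by rewrite big1 // => *; rewrite mul0r.
    by rewrite sum_delta; apply/eqP.
  case h: ((0 < a k') && (a l' < 0)); last by rewrite big1 // => *; rewrite mul0r.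
  under eq_bigr do rewrite mulrDl -!mulrA.
  rewrite big_split /= -!mulr_sumr !sum_delta /a; ring.
have rhos m : s' m -> exists k, s k && (0 < rho m k).
  case: m => [k'|[k' l']] /=.
    by case/andP => h sk; exists k'; rewrite sk h eqxx ltr01.
  case/and3P => h1 h2 h3; rewrite h1 h2 /=.
  have nkl : (k' == l') = false.
    by apply/negbTE; apply/eqP => E; move: h1; rewrite E; move: h2; lra.
  case/orP: h3 => h3.
    by exists k'; rewrite h3 eqxx nkl /= mulr1 mulr0 addr0 oppr_gt0.
  by exists l'; rewrite h3 eqxx eq_sym nkl /= mulr1 mulr0 add0r.
have nf' : ~ feasible (fun m j => \sum_k rho m k * c k (lift ord0 j))
                   (fun m => \sum_k rho m k * e k) s'.
  case=> y' Hy'.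
  pose r k := \sum_j c k (lift ord0 j) * y' j + e k.
  have Hy m : sat (s' m) (\sum_k rho m k * r k) by rewrite -lin_comb; apply: Hy'.
  have [t Ht] : exists t, forall k, sat (s k) (a k * t + r k).
    apply: one_dim.
    + move=> k ak; have := Hy (inl k); rewrite /= ak eqxx /= sum_delta.
      by [].
    + move=> k l ak al; have := Hy (inr (k, l)); rewrite /= ak al /=.
      under eq_bigr do rewrite mulrDl -!mulrA.
      by rewrite big_split /= -!mulr_sumr !sum_delta.
  apply: nf; exists (fun i => if unlift ord0 i is Some j then y' j else t) => k.
  rewrite big_ord_recl unlift_none.
  under eq_bigr do rewrite liftK.
  by rewrite -addrA; apply: Ht.
have [mu' Hmu'] := IH _ _ _ _ nf'.
exact: (cert_lift rho0 rhoc rhos Hmu').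
Qed.

End FM.

Section Voting2.
Variables (R : realType) (n : nat) (p : profile n -> R).
Hypothesis pp : forall x, 0 < p x.
Variable phi : profile n -> bool.

Definition sg (x : profile n) : R := pm1 (phi x).

Definition V (psi : profile n -> R) (i : 'I_n) : R := \sum_x p x * (psi x * pm1 (x i)).

Lemma pm1_cases (b : bool) : (pm1 b : R) = 1 \/ (pm1 b : R) = -1.
Proof. by case: b; [left|right]. Qed.

Lemma resp_le psi psi' i :
  (responsiveness p psi i <= responsiveness p psi' i) = (V psi i <= V psi' i).
Proof.
rewrite /responsiveness -/(V psi i) -/(V psi' i).
by rewrite ler_pM2r ?invr_gt0 ?ltr0n // lerD2r.
Qed.

Lemma resp_lt psi psi' i :
  (responsiveness p psi i < responsiveness p psi' i) = (V psi i < V psi' i).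
Proof.
rewrite /responsiveness -/(V psi i) -/(V psi' i).
by rewrite ltr_pM2r ?invr_gt0 ?ltr0n // ltrD2r.
Qed.

Lemma wV (w : 'I_n -> R) psi :
  \sum_i w i * V psi i = \sum_x p x * (psi x * wsum w x).
Proof.
rewrite /V /wsum.
under eq_bigr do rewrite mulr_sumr.
rewrite exchange_big /=; apply: eq_bigr => x _.
rewrite !mulr_sumr; apply: eq_bigr => i _; ring.
Qed.

Lemma key_pt w psi x : weighted_majority w phi -> -1 <= psi x <= 1 ->
  psi x * wsum w x <= sg x * wsum w x.
Proof.
case=> _ H /andP [h1 h2]; rewrite /sg.
have [W|W|W] := ltrgt0P (wsum w x).
- rewrite (proj1 (H x) W) /= mul1r.
  have : 0 <= (1 - psi x) * wsum w x by apply: mulr_ge0; lra.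
  lra.
- rewrite (proj2 (H x) W) /=.
  have : 0 <= (1 + psi x) * - wsum w x by apply: mulr_ge0; lra.
  lra.
- by rewrite W !mulr0.
Qed.

Lemma key_sum w psi : weighted_majority w phi -> random_rule psi ->
  \sum_i w i * V psi i <= \sum_i w i * V (det_rule R phi) i.
Proof.
move=> hw hpsi; rewrite !wV; apply: ler_sum => x _.
rewrite ler_pM2l //; exact: key_pt.
Qed.

Definition Dv (d : profile n -> R) (i : 'I_n) : R :=
  \sum_x d x * (p x * sg x * pm1 (x i)).

Lemma build (d : profile n -> R) : (forall x, 0 <= d x) ->
  exists psi eps, [/\ 0 < eps, random_rule psi,
    (forall i, V psi i = V (det_rule R phi) i - eps * Dv d i) &
    (forall x, 0 < d x -> psi x <> det_rule R phi x)].
Proof.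
move=> d0.
pose S := \sum_x d x.
have S0 : 0 <= S by apply: sumr_ge0.
pose eps := (1 + S)^-1.
have eps0 : 0 < eps by rewrite invr_gt0; lra.
have dS x : d x <= S.
  rewrite /S (bigD1 x) //= lerDl; by apply: sumr_ge0.
have q1 x : eps * d x <= 1.
  rewrite /eps mulrC ler_pdivrMr; last lra.
  have := dS x; lra.
exists (fun x => sg x * (1 - eps * d x)), eps; split => //.
- move=> x; have q0 : 0 <= eps * d x by apply: mulr_ge0 => //; apply: ltW.
  have := q1 x; rewrite /sg.
  by case: (phi x) => /=; lra.
- move=> i; rewrite /V /Dv mulr_sumr -sumrB; apply: eq_bigr => x _.
  rewrite /det_rule -/(sg x); ring.
- move=> x dx; rewrite /det_rule -/(sg x) => E.
  have : sg x * (eps * d x) = 0 by lra.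
  have : eps * d x != 0 by rewrite mulf_neq0 // gt_eqF.
  rewrite /sg; case: (phi x) => /=; rewrite ?mul1r ?mulN1r => /eqP h1 h2 //.
  by apply: h1; move/eqP: h2; rewrite oppr_eq0 => /eqP.
Qed.

End Voting2.

Section Voting3.
Variables (R : realType) (n : nat) (p : profile n -> R).
Hypothesis pp : forall x, 0 < p x.
Variable phi : profile n -> bool.

Local Notation sg := (sg R phi).
Local Notation V := (V p).
Local Notation Dv := (Dv p phi).

Definition KK := (('I_n + 'I_1) + profile n)%type.

Definition c_gen (b : bool) (k : KK) (i : 'I_n) : R :=
  match k with
  | inl (inl j) => (i == j)%:R
  | inl (inr _) => if b then 1 else 0
  | inr x => p x * sg x * pm1 (x i)
  end.

Definition e_gen (a : R) (b : bool) (k : KK) : R :=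
  match k with
  | inl (inl _) => a
  | inl (inr _) => if b then -1 else 0
  | inr _ => 0
  end.

Definition s_gen (st : bool) (k : KK) : bool :=
  match k with inr _ => st | _ => false end.

Lemma sum_cx x (w : 'I_n -> R) :
  \sum_i p x * sg x * pm1 (x i) * w i = p x * (sg x * wsum w x).
Proof.
rewrite /wsum !mulr_sumr; apply: eq_bigr => i _; ring.
Qed.

Lemma sum_delta_r (K : finType) (k : K) (F : K -> R) :
  \sum_l F l * (k == l)%:R = F k.
Proof.
rewrite -[RHS](sum_delta k); apply: eq_bigr => l _; by rewrite mulrC eq_sym.
Qed.

Lemma feas_gen a b st (w : 'I_n -> R) :
  (forall k, sat (s_gen st k) (\sum_i c_gen b k i * w i + e_gen a b k)) ->
  [/\ forall j, 0 <= w j + a, (b -> 0 <= \sum_j w j - 1) &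
      forall x, sat st (p x * (sg x * wsum w x))].
Proof.
move=> H; split.
- move=> j; have := H (inl (inl j)); rewrite /=.
  by rewrite sum_delta.
- move=> hb; have := H (inl (inr ord0)); rewrite /= hb.
  by under eq_bigr do rewrite mul1r.
- move=> x; have := H (inr x); rewrite /= addr0.
  by rewrite sum_cx.
Qed.

Lemma cert_gen a b st (mu : KK -> R) :
  cert (c_gen b) (e_gen a b) (s_gen st) mu ->
  let m j := mu (inl (inl j)) in let nu := mu (inl (inr ord0)) in
  let d x := mu (inr x) in
  [/\ forall k, 0 <= mu k,
      (forall i, Dv d i = - (m i + (if b then nu else 0))) &
      (a * \sum_j m j - (if b then nu else 0) < 0 \/
       (a * \sum_j m j - (if b then nu else 0) = 0 /\ exists x, st && (0 < d x)))].
Proof.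
move=> [mu0 [muc mue]] m nu d; split => //.
- move=> i; have := muc i; rewrite !big_sumType /= big_ord1.
  rewrite sum_delta_r /Dv /m /nu /d.
  case: b {muc mue} => /=; rewrite ?mulr1 ?mulr0; lra.
- have E : \sum_k mu k * e_gen a b k = a * \sum_j m j - (if b then nu else 0).
    rewrite !big_sumType /= big_ord1 -mulr_suml /m /nu.
    rewrite [X in _ + X = _]big1 ?addr0; last by move=> *; rewrite mulr0.
    case: b {muc mue} => /=; lra.
  rewrite -E; case: mue => [h|[h [k /andP [sk mk]]]]; [by left|right; split=>//].
  by case: k sk mk => [[j|j]|x] //= sx dx; exists x; rewrite sx.
Qed.


Lemma pos_sum (I : finType) (F : I -> R) i0 :
  (forall i, 0 <= F i) -> 0 < F i0 -> 0 < \sum_i F i.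
Proof.
move=> h0 h1; rewrite (bigD1 i0) //=.
have : 0 <= \sum_(i | i != i0) F i by apply: sumr_ge0.
lra.
Qed.

Lemma diff_sum (w : 'I_n -> R) psi :
  \sum_i w i * (V psi i - V (det_rule R phi) i) =
  \sum_i w i * V psi i - \sum_i w i * V (det_rule R phi) i.
Proof. by rewrite -sumrB; apply: eq_bigr => i _; rewrite mulrBr. Qed.

Lemma sat_ge0 st (v : R) : sat st v -> 0 <= v.
Proof. by case: st => //= /ltW. Qed.

Lemma sign_ok (w : 'I_n -> R) x : 0 <= p x * (sg x * wsum w x) ->
  (0 < wsum w x -> phi x = true) /\ (wsum w x < 0 -> phi x = false).
Proof.
rewrite pmulr_rge0 // /sg; case: (phi x) => /=; rewrite ?mul1r ?mulN1r => h;
  split => // h'; lra.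
Qed.

Lemma all0_sum (w : 'I_n -> R) : ~~ [exists i, w i != 0] -> forall x, wsum w x = 0.
Proof.
move/existsPn => H x; rewrite /wsum big1 // => i _.
by move: (H i); rewrite negbK => /eqP ->; rewrite mul0r.
Qed.

Lemma weak_rev (w : 'I_n -> R) : weighted_majority w phi -> (forall i, 0 <= w i) ->
  weakly_efficient p (det_rule R phi).
Proof.
move=> hw w0 [psi [hpsi hst]].
have [i0 wi0] := hw.1.
have wpos : 0 < w i0 by rewrite lt_def wi0 w0.
have := key_sum pp hw hpsi.
have : 0 < \sum_i w i * (V psi i - V (det_rule R phi) i).
  apply: (pos_sum (i0:=i0)) => [i|].
    by apply: mulr_ge0 => //; rewrite subr_ge0; apply: ltW; rewrite -resp_lt.
  by apply: mulr_gt0 => //; rewrite subr_gt0 -resp_lt.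
rewrite diff_sum; lra.
Qed.

Lemma eff_rev (w : 'I_n -> R) : weighted_majority w phi -> (forall i, 0 < w i) ->
  efficient p (det_rule R phi).
Proof.
move=> hw w0 [psi [hpsi [hwp [i0 hi0]]]].
have := key_sum pp hw hpsi.
have : 0 < \sum_i w i * (V psi i - V (det_rule R phi) i).
  apply: (pos_sum (i0:=i0)) => [i|].
    by apply: mulr_ge0; [apply: ltW|]; rewrite // subr_ge0 -resp_le.
  by apply: mulr_gt0 => //; rewrite subr_gt0 -resp_lt.
rewrite diff_sum; lra.
Qed.

Lemma strict_rev (w : 'I_n -> R) : weighted_majority w phi -> (forall i, 0 <= w i) -> no_ties w ->
  strictly_efficient p (det_rule R phi).
Proof.
move=> hw w0 nt [psi [hpsi [hne hwp]]].
have h1 : 0 <= \sum_i w i * (V psi i - V (det_rule R phi) i).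
  by apply: sumr_ge0 => i _; apply: mulr_ge0 => //; rewrite subr_ge0 -resp_le.
rewrite diff_sum !wV in h1.
pose G x := p x * (det_rule R phi x * wsum w x) - p x * (psi x * wsum w x).
have G0 x : 0 <= G x.
  rewrite /G subr_ge0 ler_pM2l //; exact: key_pt.
have SG : \sum_x G x = 0.
  have : \sum_x G x <= 0 by rewrite /G sumrB; lra.
  have : 0 <= \sum_x G x by apply: sumr_ge0.
  lra.
have GG : forall x, G x = 0.
  move=> x; have := @psumr_eq0P _ _ predT G (fun y _ => G0 y) SG x isT. by [].
apply: hne; apply: functional_extensionality => x.
have E : p x * ((det_rule R phi x - psi x) * wsum w x) = 0.
  by rewrite -(GG x) /G; ring.
move/eqP: E; rewrite !mulf_eq0 (gt_eqF (pp x)) (negbTE (nt x)) orbF /= subr_eq0.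
by move/eqP ->.
Qed.

Lemma weak_fwd : weakly_efficient p (det_rule R phi) ->
  exists w : 'I_n -> R, weighted_majority w phi /\ (forall i, 0 <= w i).
Proof.
move=> we.
have [[w Hw]|nf] := Classical_Prop.classic
   (feasible (c_gen true) (e_gen (0:R) true) (s_gen false)).
  have [h1 h2 h3] := feas_gen Hw.
  exists w; split; [split|].
  - case: (boolP [exists i, w i != 0]) => [/existsP //|H].
    have := h2 isT; rewrite big1 ?sub0r; first lra.
    by move=> i _; move/existsPn: H => /(_ i); rewrite negbK => /eqP.
  - move=> x; apply: sign_ok; exact: (sat_ge0 (h3 x)).
  - by move=> j; have := h1 j; rewrite addr0.
have [mu Hmu] := FM nf.
have [mu0 hD hbr] := cert_gen Hmu.
have nu0 : 0 < mu (inl (inr ord0)).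
  by case: hbr => [|[_ [x //]]]; rewrite mul0r; lra.
have [psi [eps [e0 rr hV _]]] := build p phi (fun x => mu0 (inr x)).
exfalso; apply: we; exists psi; split => // i.
rewrite resp_lt hV hD /=.
have : 0 < eps * (mu (inl (inl i)) + mu (inl (inr ord0))).
  by apply: mulr_gt0 => //; have := mu0 (inl (inl i)); lra.
lra.
Qed.

Lemma eff_fwd : (0 < n)%N -> efficient p (det_rule R phi) ->
  exists w : 'I_n -> R, weighted_majority w phi /\ (forall i, 0 < w i).
Proof.
move=> hn ef.
have [[w Hw]|nf] := Classical_Prop.classic
   (feasible (c_gen false) (e_gen (-1 : R) false) (s_gen false)).
  have [h1 h2 h3] := feas_gen Hw.
  have wp i : 0 < w i by have := h1 i; lra.
  exists w; split; [split|] => //.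
  - by exists (Ordinal hn); rewrite gt_eqF.
  - move=> x; apply: sign_ok; exact: (sat_ge0 (h3 x)).
have [mu Hmu] := FM nf.
have [mu0 hD hbr] := cert_gen Hmu.
have [i0 hi0] : exists i0, 0 < mu (inl (inl i0)).
  case: (boolP [exists i, 0 < mu (inl (inl i))]) => [/existsP //|/existsPn H].
  have S0 : \sum_j mu (inl (inl j)) = 0.
    apply: big1 => j _; have := H j; have := mu0 (inl (inl j)); rewrite -leNgt.
    lra.
  by case: hbr => [|[_ [x //]]]; rewrite /= S0 mulr0; lra.
have [psi [eps [e0 rr hV _]]] := build p phi (fun x => mu0 (inr x)).
exfalso; apply: ef; exists psi; split => //; split.
  move=> i; rewrite resp_le hV hD /=.
  have : 0 <= eps * (mu (inl (inl i)) + 0).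
    by apply: mulr_ge0; [apply: ltW|]; have := mu0 (inl (inl i)); lra.
  lra.
exists i0; rewrite resp_lt hV hD /=.
have : 0 < eps * (mu (inl (inl i0)) + 0) by apply: mulr_gt0 => //; lra.
lra.
Qed.

Lemma strict_fwd : strictly_efficient p (det_rule R phi) ->
  exists w : 'I_n -> R, weighted_majority w phi /\ (forall i, 0 <= w i) /\ no_ties w.
Proof.
move=> se.
have [[w Hw]|nf] := Classical_Prop.classic
   (feasible (c_gen false) (e_gen (0:R) false) (s_gen true)).
  have [h1 h2 h3] := feas_gen Hw.
  have nt : no_ties w.
    move=> x; have := h3 x; rewrite /=; apply: contraTneq => ->.
    by rewrite !mulr0 ltxx.
  exists w; split; [split|split] => //.
  - case: (boolP [exists i, w i != 0]) => [/existsP //|H].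
    by have := nt [ffun => true]; rewrite all0_sum // eqxx.
  - move=> x; apply: sign_ok; exact: (sat_ge0 (h3 x)).
  - by move=> j; have := h1 j; rewrite addr0.
have [mu Hmu] := FM nf.
have [mu0 hD hbr] := cert_gen Hmu.
have [x0 hx0] : exists x, 0 < mu (inr x).
  case: hbr => [|[_ [x /andP [_ h]]]]; last by exists x.
  by rewrite mul0r; lra.
have [psi [eps [e0 rr hV hne]]] := build p phi (fun x => mu0 (inr x)).
exfalso; apply: se; exists psi; split => //; split.
  by move=> E; apply: (hne x0 hx0); rewrite E.
move=> i; rewrite resp_le hV hD /=.
have : 0 <= eps * (mu (inl (inl i)) + 0).
  by apply: mulr_ge0; [apply: ltW|]; have := mu0 (inl (inl i)); lra.
lra.
Qed.

End Voting3.

Theorem propositionB (R : realType) (n : nat) (hn : (0 < n)%N)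
    (p : profile n -> R) (hp : full_support_dist p) (phi : profile n -> bool) :
  (strictly_efficient p (det_rule R phi) <->
     exists w : 'I_n -> R, weighted_majority w phi /\ (forall i, 0 <= w i) /\ no_ties w)
  /\
  (efficient p (det_rule R phi) <->
     exists w : 'I_n -> R, weighted_majority w phi /\ (forall i, 0 < w i))
  /\
  (weakly_efficient p (det_rule R phi) <->
     exists w : 'I_n -> R, weighted_majority w phi /\ (forall i, 0 <= w i)).
Proof.
have pp := hp.1.
split; [|split]; split.
- exact: strict_fwd.
- by case=> w [hw [w0 nt]]; apply: (strict_rev pp hw w0 nt).
- exact: eff_fwd.
- by case=> w [hw w0]; apply: (eff_rev pp hw w0).
- exact: weak_fwd.
- by case=> w [hw w0]; apply: (weak_rev pp hw w0).
Qed.
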